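(* Let $a\in C\ell_{1,2}$. Then there is a unique $x\in C\ell_{1,2}$ satisfying $axa=a$, $xax=x$, $(ax)'=ax$ and $(xa)'=xa$.
   Context: $C\ell_{1,2}$ is the real Clifford algebra generated by $i_1,i_2,i_3$ with $i_1^2=1$, $i_2^2=i_3^2=-1$ and $i_ti_m=-i_mi_t$ for $t\neq m$, with real basis $e_0=1$, $e_1=i_1$, $e_2=i_2$, $e_3=i_1i_2$, $e_4=i_3$, $e_5=i_1i_3$, $e_6=i_2i_3$, $e_7=i_1i_2i_3$. For $a=\sum_{t=0}^7 a_te_t$ the prime is $a'=a_0+a_1e_1-a_2e_2+a_3e_3-a_4e_4+a_5e_5-a_6e_6-a_7e_7$. *)

(* Defs.v *)
From Stdlib Require Import Reals List Arith.
Import ListNotations.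
Open Scope R_scope.

(* An element a = sum_{t=0}^7 a_t e_t, with basis
   e0=1, e1=i1, e2=i2, e3=i1 i2, e4=i3, e5=i1 i3, e6=i2 i3, e7=i1 i2 i3.
   Index t read in binary: bit 0 <-> i1, bit 1 <-> i2, bit 2 <-> i3,
   and e_t is the product of the corresponding generators in increasing order. *)
Record Cl12 := mkCl12 {
  c0 : R; c1 : R; c2 : R; c3 : R; c4 : R; c5 : R; c6 : R; c7 : R }.

Definition coef (a : Cl12) (t : nat) : R :=
  match t with
  | 0 => c0 a | 1 => c1 a | 2 => c2 a | 3 => c3 a
  | 4 => c4 a | 5 => c5 a | 6 => c6 a | _ => c7 a
  end.

Definition ofFun (f : nat -> R) : Cl12 :=
  mkCl12 (f 0%nat) (f 1%nat) (f 2%nat) (f 3%nat) (f 4%nat) (f 5%nat) (f 6%nat) (f 7%nat).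

Definition bitn (t k : nat) : nat := if Nat.testbit t k then 1%nat else 0%nat.

(* e_s * e_t = basis_sign s t * e_(s xor t):
   one factor (-1) per transposition needed to sort the generators
   (pairs (i in s, j in t) with i > j), and one factor i_m^2 per common
   generator (i1^2 = 1, i2^2 = i3^2 = -1). *)
Definition basis_sign (s t : nat) : R :=
  let swaps := (bitn s 1 * bitn t 0 + bitn s 2 * bitn t 0 + bitn s 2 * bitn t 1)%nat in
  let negsq := (bitn s 1 * bitn t 1 + bitn s 2 * bitn t 2)%nat in
  if Nat.even (swaps + negsq) then 1 else -1.

Definition clmul (a b : Cl12) : Cl12 :=
  ofFun (fun k =>
    fold_right Rplus 0
      (map (fun i => basis_sign i (Nat.lxor i k) * coef a i * coef b (Nat.lxor i k))
           (seq 0 8))).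

Definition clprime (a : Cl12) : Cl12 :=
  mkCl12 (c0 a) (c1 a) (- c2 a) (c3 a) (- c4 a) (c5 a) (- c6 a) (- c7 a).

(* Main.v *)
Require Import Defs.
From Stdlib Require Import Reals Lra.
Open Scope R_scope.

Ltac crush := repeat match goal with x : Cl12 |- _ => destruct x end;
  unfold clmul, clprime, ofFun, basis_sign, bitn, coef; simpl; f_equal; ring.

Definition scale (r : R) (a : Cl12) : Cl12 :=
  mkCl12 (r * Defs.c0 a) (r * Defs.c1 a) (r * Defs.c2 a) (r * Defs.c3 a) (r * Defs.c4 a) (r * Defs.c5 a) (r * Defs.c6 a) (r * Defs.c7 a).
Definition csub (a b : Cl12) : Cl12 :=
  mkCl12 (Defs.c0 a - Defs.c0 b) (Defs.c1 a - Defs.c1 b) (Defs.c2 a - Defs.c2 b) (Defs.c3 a - Defs.c3 b)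
         (Defs.c4 a - Defs.c4 b) (Defs.c5 a - Defs.c5 b) (Defs.c6 a - Defs.c6 b) (Defs.c7 a - Defs.c7 b).
Definition conjc (a : Cl12) : Cl12 :=
  mkCl12 (Defs.c0 a) (- Defs.c1 a) (- Defs.c2 a) (- Defs.c3 a) (- Defs.c4 a) (- Defs.c5 a) (- Defs.c6 a) (Defs.c7 a).
Definition zero := mkCl12 0 0 0 0 0 0 0 0.
Definition one := mkCl12 1 0 0 0 0 0 0 0.
Definition sq (a : Cl12) : R :=
  Defs.c0 a * Defs.c0 a + Defs.c1 a * Defs.c1 a + Defs.c2 a * Defs.c2 a + Defs.c3 a * Defs.c3 a +
  Defs.c4 a * Defs.c4 a + Defs.c5 a * Defs.c5 a + Defs.c6 a * Defs.c6 a + Defs.c7 a * Defs.c7 a.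

Lemma assoc a b c : clmul (clmul a b) c = clmul a (clmul b c).
Proof. crush. Qed.
Lemma prime_mul a b : clprime (clmul a b) = clmul (clprime b) (clprime a).
Proof. crush. Qed.
Lemma prime_prime a : clprime (clprime a) = a.
Proof. destruct a; unfold clprime; simpl; f_equal; ring. Qed.
Lemma scale_l r a b : clmul (scale r a) b = scale r (clmul a b).
Proof. unfold scale; crush. Qed.
Lemma scale_r r a b : clmul a (scale r b) = scale r (clmul a b).
Proof. unfold scale; crush. Qed.
Lemma prime_scale r a : clprime (scale r a) = scale r (clprime a).
Proof. destruct a; unfold clprime, scale; simpl; f_equal; ring. Qed.
Lemma scale_scale r s a : scale r (scale s a) = scale (r * s) a.
Proof. destruct a; unfold scale; simpl; f_equal; ring. Qed.
Lemma scale_1 a : scale 1 a = a.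
Proof. destruct a; unfold scale; simpl; f_equal; ring. Qed.
Lemma mul_zero_l a : clmul zero a = zero.
Proof. unfold zero; crush. Qed.
Lemma prime_zero : clprime zero = zero.
Proof. unfold clprime, zero; simpl; f_equal; ring. Qed.
Lemma csub_zero a : csub a zero = a.
Proof. destruct a; unfold csub, zero; simpl; f_equal; ring. Qed.
Lemma mul_one_l a : clmul one a = a.
Proof. unfold one; crush. Qed.
Lemma mul_one_r a : clmul a one = a.
Proof. unfold one; crush. Qed.
Lemma prime_one : clprime one = one.
Proof. unfold clprime, one; simpl; f_equal; ring. Qed.
Lemma sq_prime a : sq (clprime a) = sq a.
Proof. destruct a; unfold sq, clprime; simpl; ring. Qed.

Lemma key1 a : clmul (clmul a (clprime a)) a =
  csub (scale (2 * sq a) a) (clmul (clmul a (conjc a)) (conjc (clprime a))).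
Proof. unfold csub, scale, conjc, sq; crush. Qed.
Lemma normp a : clmul (clprime a) (conjc (clprime a)) = clprime (clmul a (conjc a)).
Proof. unfold conjc; crush. Qed.
Lemma norm_comm a : clmul (conjc a) a = clmul a (conjc a).
Proof. unfold conjc; crush. Qed.
Lemma norm_shape a : exists p q, clmul a (conjc a) = mkCl12 p 0 0 0 0 0 0 q.
Proof.
  exists (Defs.c0 (clmul a (conjc a))), (Defs.c7 (clmul a (conjc a))).
  unfold conjc; crush.
Qed.
Lemma central_comm p q a : clmul (mkCl12 p 0 0 0 0 0 0 q) a = clmul a (mkCl12 p 0 0 0 0 0 0 q).
Proof. crush. Qed.
Lemma central_inv p q : p * p + q * q <> 0 ->
  clmul (mkCl12 p 0 0 0 0 0 0 q) (mkCl12 (p / (p*p+q*q)) 0 0 0 0 0 0 (- q / (p*p+q*q))) = one.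
Proof. intro H. unfold clmul, one, ofFun, basis_sign, bitn, coef; simpl; f_equal; field; auto. Qed.

Lemma uniq a x y :
    clmul (clmul a x) a = a /\ clmul (clmul x a) x = x /\
    clprime (clmul a x) = clmul a x /\ clprime (clmul x a) = clmul x a ->
    clmul (clmul a y) a = a /\ clmul (clmul y a) y = y /\
    clprime (clmul a y) = clmul a y /\ clprime (clmul y a) = clmul y a ->
    x = y.
Proof.
  intros [X1 [X2 [X3 X4]]] [Y1 [Y2 [Y3 Y4]]].
  assert (Ha : clprime a = clmul (clprime a) (clmul (clprime y) (clprime a))).
  { rewrite <- Y1 at 1. rewrite !prime_mul. reflexivity. }
  assert (E1 : clmul a x = clmul a y).
  { rewrite <- X3, prime_mul, Ha, <- assoc, <- prime_mul, <- prime_mul, X3, Y3.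
    rewrite <- (assoc (clmul a x) a y), X1. reflexivity. }
  assert (E2 : clmul x a = clmul y a).
  { rewrite <- X4, prime_mul, Ha, <- !assoc, <- prime_mul, assoc, <- prime_mul, X4, Y4.
    rewrite (assoc y a (clmul x a)), <- (assoc a x a), X1. reflexivity. }
  rewrite <- X2, assoc, E1, <- assoc, E2. exact Y2.
Qed.

Theorem lemma3p1 (a : Cl12) :
  exists! x : Cl12,
    clmul (clmul a x) a = a /\
    clmul (clmul x a) x = x /\
    clprime (clmul a x) = clmul a x /\
    clprime (clmul x a) = clmul x a.
Proof.
  cut (exists x : Cl12,
    clmul (clmul a x) a = a /\
    clmul (clmul x a) x = x /\
    clprime (clmul a x) = clmul a x /\
    clprime (clmul x a) = clmul x a).
  { intros [x Hx]. exists x. split; [exact Hx|]. intros y Hy. exact (uniq a x y Hx Hy). }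
  destruct (norm_shape a) as [p [q Hpq]].
  destruct (Req_dec (p * p + q * q) 0) as [D|D].
  - assert (Hp : p = 0) by nra. assert (Hq : q = 0) by nra. subst p q.
    change (mkCl12 0 0 0 0 0 0 0 0) with zero in Hpq.
    destruct (Req_dec (sq a) 0) as [S|S].
    + exists zero.
      assert (Az : a = zero).
      { destruct a; unfold sq in S; simpl in S; unfold zero; f_equal; nra. }
      subst a. rewrite !mul_zero_l. unfold clprime, zero; simpl.
      repeat split; f_equal; ring.
    + set (k := / (2 * sq a)).
      assert (Hk : k * (2 * sq a) = 1) by (unfold k; field; auto).
      assert (K1 : clmul (clmul a (clprime a)) a = scale (2 * sq a) a).
      { rewrite key1, Hpq, mul_zero_l, csub_zero. reflexivity. }
      assert (K2 : clmul (clmul (clprime a) a) (clprime a) = scale (2 * sq a) (clprime a)).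
      { rewrite <- (prime_prime a) at 2. rewrite key1, normp, Hpq, prime_prime, sq_prime.
        rewrite prime_zero, mul_zero_l, csub_zero. reflexivity. }
      exists (scale k (clprime a)).
      rewrite ?scale_r, ?scale_l, ?scale_r, ?scale_l, ?prime_scale, ?prime_mul, ?prime_prime.
      repeat split.
      * rewrite K1, scale_scale, Hk, scale_1. reflexivity.
      * rewrite !scale_scale, K2, scale_scale.
        replace (k * k * (2 * sq a)) with k by (rewrite Rmult_assoc, Hk; ring).
        reflexivity.
  - set (z := mkCl12 (p / (p*p+q*q)) 0 0 0 0 0 0 (- q / (p*p+q*q))).
    assert (Ax : clmul a (clmul (conjc a) z) = one).
    { rewrite <- assoc, Hpq. apply central_inv; auto. }
    assert (Xa : clmul (clmul (conjc a) z) a = one).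
    { rewrite assoc. unfold z. rewrite central_comm. fold z.
      rewrite <- assoc, norm_comm, Hpq. apply central_inv; auto. }
    exists (clmul (conjc a) z).
    rewrite Ax, Xa, ?mul_one_l, ?mul_one_r, prime_one. repeat split.
Qed.
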